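(* Let $m,n$ be positive integers and $x\ge 2$ real. Define $\alpha_j\ge0$ ($1\le j\le n$) and $\beta_k\ge0$ ($1\le k\le m$) by $$\cosh\frac{\alpha_j}{2}=\frac{x}{\cos\frac{\pi(2j-1)}{4n}}-\cos\frac{\pi(2j-1)}{4n},\qquad \cosh\frac{\beta_k}{2}=\frac{x}{\cos\frac{\pi(2k-1)}{4m}}-\cos\frac{\pi(2k-1)}{4m}.$$ Then $$\prod_{j=1}^n\left(\cosh(m\alpha_j)+\cos\frac{m\pi(2j-1)}{2n}\right)=\prod_{k=1}^m\left(\cosh(n\beta_k)+\cos\frac{n\pi(2k-1)}{2m}\right).$$ *)

(* Defs.v *)
From Stdlib Require Import Reals.
Open Scope R_scope.

Fixpoint prod1 (n : nat) (f : nat -> R) : R :=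
  match n with
  | O => 1
  | S k => prod1 k f * f (S k)
  end.

Definition theta (n j : nat) : R := PI * (2 * INR j - 1) / (4 * INR n).

(* Main.v *)
Require Import Defs.
From Stdlib Require Import Reals Lra Lia.
From mathcomp Require all_boot all_algebra complex Rstruct ring.
Open Scope R_scope.

Fixpoint chp (u v : R) (k : nat) : (R*R)*(R*R) :=
  match k with
  | O => ((1,0),(u,v))
  | S k => let p := chp u v k in
      (snd p, ((u * fst (snd p) - v * snd (snd p)) + (u * fst (snd p) - v * snd (snd p)) - fst (fst p),
               (u * snd (snd p) + v * fst (snd p)) + (u * snd (snd p) + v * fst (snd p)) - snd (fst p)))
  end.

Module MC.
Import all_boot all_algebra complex Rstruct ring.
Import GRing.Theory Num.Theory.
Local Open Scope ring_scope.
Local Open Scope complex_scope.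
Local Notation C := (R[i]).

Fixpoint Tc (k : nat) : {poly C} :=
  match k with
  | 0 => 1
  | S k1 => match k1 with 0 => 'X | S k0 => (Tc k1 * 'X) *+ 2 - Tc k0 end
  end.

Lemma Tc_eval u v k : (Tc k).[u +i* v] = (chp u v k).1.1 +i* (chp u v k).1.2 /\
   (Tc k.+1).[u +i* v] = (chp u v k).2.1 +i* (chp u v k).2.2.
Proof.
elim: k => [|k [IH1 IH2]].
  by rewrite /= hornerC hornerX.
split; first by rewrite IH2.
rewrite [Tc _]/= hornerD hornerN hornerMn hornerM hornerX IH1 IH2 /=.
rewrite !RplusE !RminusE !RmultE.
rewrite !mulr2n; simpc.
congr Complex; ring.
Qed.

Lemma Tc_size k : size (Tc k.+1) = k.+2 /\ lead_coef (Tc k.+1) = 2%:R ^+ k /\ size (Tc k) = k.+1.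
Proof.
elim: k => [|k [IH1 [IH2 IH3]]].
  by rewrite /= size_polyX lead_coefX size_poly1 expr0.
have hp : Tc k.+1 != 0 by rewrite -size_poly_eq0 IH1.
have h2 : (2%:R : C) != 0 by rewrite pnatr_eq0.
have hs : size ((Tc k.+1 * 'X) *+ 2) = k.+3.
  by rewrite -scaler_nat size_scale // size_mulX // IH1.
have hs2 : (size (- Tc k) < size ((Tc k.+1 * 'X) *+ 2))%N by rewrite size_polyN hs IH3.
change (Tc k.+2) with ((Tc k.+1 * 'X) *+ 2 - Tc k).
split; first by rewrite size_polyDl // hs.
split; last by [].
by rewrite lead_coefDl // -scaler_nat lead_coefZ lead_coefMX IH2 exprS.
Qed.

Definition nsq (w : C) : R := complex.Re w ^+ 2 + complex.Im w ^+ 2.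

Lemma sqid (T : comRingType) (a b c e : T) :
  (a * c - b * e) ^+ 2 + (a * e + b * c) ^+ 2 = (a ^+ 2 + b ^+ 2) * (c ^+ 2 + e ^+ 2).
Proof. ring. Qed.

Lemma four_id (T : comRingType) : ((1+1)^+2 + (0+0)^+2 : T) = 4%:R.
Proof. ring. Qed.

Lemma nsqM w1 w2 : nsq (w1 * w2) = nsq w1 * nsq w2.
Proof. case: w1 => a b; case: w2 => c e; rewrite /nsq; simpc; exact: sqid. Qed.

Lemma nsq1 : nsq 1 = 1.
Proof. rewrite /nsq /= expr1n expr0n /=; exact: addr0. Qed.

Lemma prod1E m (f : nat -> R) : prod1 m f = \prod_(1 <= i < m.+1) f i.
Proof.
elim: m => [|m IH]; first by rewrite big_geq.
by rewrite big_nat_recr //= IH.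
Qed.

Local Close Scope ring_scope.

Lemma cheb_prod m (d : nat -> R) (u v : R) :
  lt 0 m ->
  (forall k, le 1 k /\ le k m -> fst (chp (d k) 0 m) = (0,0)) ->
  (forall i j, le 1 i /\ le i m -> le 1 j /\ le j m -> d i = d j -> i = j) ->
  fst (fst (chp u v m)) ^ 2 + snd (fst (chp u v m)) ^ 2
   = 4 ^ (Nat.sub m 1) * prod1 m (fun k => (u - d k) ^ 2 + v ^ 2).
Proof.
Local Open Scope ring_scope.
change (Nat.sub m 1) with (subn m 1).
move=> /ltP hm hroots hinj.
set p := Tc m.
have [hs [hl _]] := Tc_size m.-1.
rewrite (prednK hm) -/p in hs hl.
set rs := [seq (d i)%:C | i <- iota 1 m].
have hall : all (root p) rs.
  apply/allP => z /mapP [i Hi ->].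
  rewrite mem_iota in Hi; case/andP: Hi => Hi1 Hi2.
  rewrite add1n ltnS in Hi2.
  have hk : le 1 i /\ le i m by split; apply/leP.
  have h := hroots i hk; rewrite R0E in h.
  rewrite /root /p -complexr0 (proj1 (Tc_eval _ _ _)) h /=.
  by apply/eqP.
have huniq : uniq_roots rs.
  rewrite uniq_rootsE map_inj_in_uniq ?iota_uniq //.
  move=> i j; rewrite !mem_iota => /andP [Hi1 Hi2] /andP [Hj1 Hj2] [] h.
  rewrite add1n ltnS in Hi2; rewrite add1n ltnS in Hj2.
  by apply: hinj => //; split; apply/leP.
have [q hq] := uniq_roots_prod_XsubC hall huniq.
have hP : size (\prod_(z <- rs) ('X - z%:P)) = m.+1.
  by rewrite size_prod_XsubC size_map size_iota.
have hq0 : q != 0.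
  by apply/eqP => h0; move: hs; rewrite hq h0 mul0r size_poly0.
have hprod0 : \prod_(z <- rs) ('X - z%:P) != 0 by rewrite -size_poly_eq0 hP.
have hsq : size q = 1%N.
  move: hs; rewrite hq size_mul // hP addnS /= => /eqP.
  by rewrite -[X in _ == X]add1n eqn_add2r => /eqP.
have hqc : q = (lead_coef q)%:P.
  by rewrite {1}(size1_polyC (eq_leq hsq)) /lead_coef hsq.
have hlq : lead_coef q = 2%:R ^+ m.-1.
  by move: hl; rewrite hq lead_coefM lead_coef_prod_XsubC mulr1.
have hev : p.[u +i* v] = 2%:R ^+ m.-1 * \prod_(z <- rs) ((u +i* v) - z).
  rewrite hq hqc hlq hornerM hornerC horner_prod; congr (_ * _).
  by apply: eq_bigr => z _; rewrite hornerXsubC.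
have := congr1 nsq hev.
rewrite nsqM (big_morph nsq nsqM nsq1) big_map.
rewrite /p (proj1 (Tc_eval _ _ _)).
have h4 : nsq (2%:R ^+ m.-1) = 4%:R ^+ m.-1.
  elim: (m.-1) => [|k IH]; first by rewrite !expr0 nsq1.
  rewrite !exprS nsqM IH; congr (_ * _).
  rewrite /nsq /=; exact: four_id.
rewrite h4 => H.
transitivity (nsq ((chp u v m).1.1 +i* (chp u v m).1.2)).
  by rewrite /nsq RplusE !RpowE.
rewrite H RpowE IZRposE INRE subn1 prod1E /index_iota subSS subn0.
congr (_ * _).
apply: eq_bigr => i _.
rewrite RplusE RminusE !RpowE /nsq; simpc; rewrite /=.
by [].
Qed.

End MC.

Lemma cosh_plus' a b : cosh (a + b) = cosh a * cosh b + sinh a * sinh b.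
Proof.
  unfold cosh, sinh. replace (-(a+b)) with (-a + -b) by ring.
  rewrite !exp_plus. field.
Qed.

Lemma sinh_plus' a b : sinh (a + b) = sinh a * cosh b + cosh a * sinh b.
Proof.
  unfold cosh, sinh. replace (-(a+b)) with (-a + -b) by ring.
  rewrite !exp_plus. field.
Qed.

Lemma cosh_neg' a : cosh (- a) = cosh a.
Proof. unfold cosh. rewrite Ropp_involutive. lra. Qed.

Lemma sinh_neg' a : sinh (- a) = - sinh a.
Proof. unfold sinh. rewrite Ropp_involutive. lra. Qed.

Lemma cosh_sinh_sq a : cosh a ^ 2 - sinh a ^ 2 = 1.
Proof.
  unfold cosh, sinh.
  assert (H : exp a * exp (- a) = 1).
  { rewrite <- exp_plus. replace (a + - a) with 0 by ring. apply exp_0. }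
  simpl. field_simplify. nra.
Qed.

Lemma cosh_double a : cosh (2 * a) = 2 * cosh a ^ 2 - 1.
Proof.
  replace (2 * a) with (a + a) by ring. rewrite cosh_plus'.
  pose proof (cosh_sinh_sq a). nra.
Qed.

Lemma chpA (A B : R) (k : nat) :
  chp (cosh A * cos B) (sinh A * sin B) k =
  ((cosh (INR k * A) * cos (INR k * B), sinh (INR k * A) * sin (INR k * B)),
   (cosh (INR (S k) * A) * cos (INR (S k) * B), sinh (INR (S k) * A) * sin (INR (S k) * B))).
Proof.
  induction k as [|k IH].
  - simpl. rewrite !Rmult_0_l, cosh_0, sinh_0, cos_0, sin_0, !Rmult_1_l.
    f_equal; f_equal; ring.
  - cbn [chp]. rewrite IH. cbn [fst snd].
    set (X := INR (S k) * A). set (Y := INR (S k) * B).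
    replace (INR k * A) with (X + - A) by (unfold X; rewrite S_INR; ring).
    replace (INR k * B) with (Y + - B) by (unfold Y; rewrite S_INR; ring).
    replace (INR (S (S k)) * A) with (X + A) by (unfold X; rewrite (S_INR (S k)); ring).
    replace (INR (S (S k)) * B) with (Y + B) by (unfold Y; rewrite (S_INR (S k)); ring).
    rewrite !cosh_plus', !sinh_plus', !cos_plus, !sin_plus, cosh_neg', sinh_neg', cos_neg, sin_neg.
    f_equal; f_equal; ring.
Qed.

Lemma sin_kPI k : sin (INR k * PI) = 0.
Proof.
  induction k as [|k IH].
  - simpl. rewrite Rmult_0_l. apply sin_0.
  - rewrite S_INR. replace ((INR k + 1) * PI) with (INR k * PI + PI) by ring.
    rewrite sin_plus, IH, sin_PI. ring.
Qed.

Lemma theta_range n j : (1 <= j <= n)%nat -> 0 < theta n j < PI / 2.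
Proof.
  intros [h1 h2].
  apply le_INR in h1. apply le_INR in h2. simpl in h1.
  pose proof PI_RGT_0.
  assert (Hn : 0 < INR n) by lra.
  assert (E : theta n j * (4 * INR n) = PI * (2 * INR j - 1)).
  { unfold theta. field. lra. }
  split; nra.
Qed.


Definition G (x p q : R) : R := x ^ 2 - 4 * p * q * (x - p - q + 1).

Lemma prod1_ext n f g : (forall j, (1 <= j <= n)%nat -> f j = g j) -> prod1 n f = prod1 n g.
Proof.
  induction n as [|n IH]; intros H; simpl; auto.
  rewrite IH by (intros; apply H; lia). rewrite H by lia. reflexivity.
Qed.

Lemma prod1_mul n f g : prod1 n (fun j => f j * g j) = prod1 n f * prod1 n g.
Proof. induction n as [|n IH]; simpl; [ring|rewrite IH; ring]. Qed.

Lemma prod1_const n c : prod1 n (fun _ => c) = c ^ n.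
Proof. induction n as [|n IH]; simpl; [ring|rewrite IH; ring]. Qed.

Lemma prod1_pow n f m : prod1 n (fun j => f j ^ m) = prod1 n f ^ m.
Proof. induction n as [|n IH]; simpl; [rewrite pow1; ring|rewrite IH, Rpow_mult_distr; ring]. Qed.

Lemma prod1_swap n m F :
  prod1 n (fun j => prod1 m (fun k => F j k)) = prod1 m (fun k => prod1 n (fun j => F j k)).
Proof.
  induction n as [|n IH]; simpl.
  - rewrite prod1_const, pow1. reflexivity.
  - rewrite IH, <- prod1_mul. reflexivity.
Qed.

Lemma prod1_pos n f : (forall j, (1 <= j <= n)%nat -> 0 < f j) -> 0 < prod1 n f.
Proof.
  induction n as [|n IH]; intros H; simpl; [lra|].
  apply Rmult_lt_0_compat; [apply IH; intros; apply H; lia | apply H; lia].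
Qed.

Lemma INR_pos n : (0 < n)%nat -> 0 < INR n.
Proof. intros. apply lt_0_INR. exact H. Qed.

Lemma cos_theta_pos n j : (1 <= j <= n)%nat -> 0 < cos (theta n j).
Proof. intros H. destruct (theta_range n j H). apply cos_gt_0; lra. Qed.

Lemma d_roots m k : (0 < m)%nat -> (1 <= k <= m)%nat ->
  fst (chp (cos (2 * theta m k)) 0 m) = (0, 0).
Proof.
  intros hm hk.
  pose proof (chpA 0 (2 * theta m k) m) as H.
  rewrite cosh_0, sinh_0, Rmult_1_l, Rmult_0_l in H.
  rewrite H. cbn [fst]. rewrite !Rmult_0_r, cosh_0, sinh_0, Rmult_1_l, Rmult_0_l.
  f_equal.
  pose proof (INR_pos m hm).
  replace (INR m * (2 * theta m k)) with (- (PI / 2 - INR k * PI)).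
  - rewrite cos_neg, cos_shift. apply sin_kPI.
  - unfold theta. field. lra.
Qed.

Lemma d_inj m i j : (1 <= i <= m)%nat -> (1 <= j <= m)%nat ->
  cos (2 * theta m i) = cos (2 * theta m j) -> i = j.
Proof.
  intros hi hj H.
  pose proof (theta_range m i hi). pose proof (theta_range m j hj).
  apply cos_inj in H; [| lra | lra].
  assert (hm : (0 < m)%nat) by lia.
  pose proof (INR_pos m hm). pose proof PI_RGT_0.
  assert (E : INR i = INR j).
  { unfold theta in H.
    assert (H' : PI * (2 * INR i - 1) = PI * (2 * INR j - 1)).
    { apply (Rmult_eq_reg_r (/ (2 * INR m))).
      - replace (PI * (2 * INR i - 1) * / (2 * INR m)) with (2 * (PI * (2 * INR i - 1) / (4 * INR m))) by (field; lra).
        replace (PI * (2 * INR j - 1) * / (2 * INR m)) with (2 * (PI * (2 * INR j - 1) / (4 * INR m))) by (field; lra).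
        exact H.
      - apply Rinv_neq_0_compat. lra. }
    nra. }
  apply INR_eq. exact E.
Qed.

Lemma term_eq m n j a : (0 < m)%nat -> (0 < n)%nat -> (1 <= j <= n)%nat ->
  cosh (INR m * a) + cos (INR m * PI * (2 * INR j - 1) / (2 * INR n)) =
  2 * (4 ^ (m - 1) * prod1 m (fun k =>
     (cosh (a / 2) * cos (theta n j) - cos (2 * theta m k)) ^ 2
      + (sinh (a / 2) * sin (theta n j)) ^ 2)).
Proof.
  intros hm hn hj.
  pose proof (MC.cheb_prod m (fun k => cos (2 * theta m k))
     (cosh (a / 2) * cos (theta n j)) (sinh (a / 2) * sin (theta n j)) hm
     (fun k hk => d_roots m k hm hk) (fun i j hi hj => d_inj m i j hi hj)) as HC.
  cbv beta in HC. rewrite <- HC. rewrite chpA. cbn [fst].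
  pose proof (INR_pos n hn).
  replace (INR m * a) with (2 * (INR m * (a / 2))) by field.
  replace (INR m * PI * (2 * INR j - 1) / (2 * INR n)) with (2 * (INR m * theta n j))
    by (unfold theta; field; lra).
  rewrite cosh_double, cos_2a_cos.
  set (X := INR m * (a / 2)). set (Y := INR m * theta n j).
  pose proof (cosh_sinh_sq X). pose proof (sin2_cos2 Y).
  assert (E : (sinh X * sin Y) ^ 2 = (cosh X ^ 2 - 1) * (1 - cos Y ^ 2)).
  { rewrite Rpow_mult_distr. f_equal; unfold Rsqr in *; simpl in *; lra. }
  unfold snd. rewrite E. ring.
Qed.

Lemma G_sym x p q : G x p q = G x q p.
Proof. unfold G. ring. Qed.

Lemma E_id x a c s S q : c <> 0 -> a = x / c - c -> S ^ 2 = a ^ 2 - 1 -> s ^ 2 = 1 - c ^ 2 ->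
  c ^ 2 * ((a * c - (2 * q - 1)) ^ 2 + (S * s) ^ 2) = G x (c ^ 2) q.
Proof.
  intros hc ha hS hs.
  assert (hac : a * c = x - c ^ 2) by (rewrite ha; field; exact hc).
  assert (hac2 : c ^ 2 * a ^ 2 = (x - c ^ 2) ^ 2) by (rewrite <- hac; ring).
  replace (c ^ 2 * ((a * c - (2 * q - 1)) ^ 2 + (S * s) ^ 2))
    with (c ^ 2 * (a * c - (2 * q - 1)) ^ 2 + (c ^ 2 * a ^ 2 - c ^ 2) * s ^ 2)
    by (rewrite Rpow_mult_distr, hS; ring).
  rewrite hac, hac2, hs. unfold G. ring.
Qed.

Definition Pc (n : nat) : R := prod1 n (fun j => cos (theta n j) ^ 2).
Definition Qc (n : nat) : R := 2 * 4 ^ (n - 1).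

Lemma side (m n : nat) (x : R) (alpha : nat -> R)
  (hm : (0 < m)%nat) (hn : (0 < n)%nat)
  (halpha : forall j : nat, (1 <= j <= n)%nat ->
     0 <= alpha j /\
     cosh (alpha j / 2) = x / cos (theta n j) - cos (theta n j)) :
  prod1 n (fun j => cosh (INR m * alpha j)
                    + cos (INR m * PI * (2 * INR j - 1) / (2 * INR n))) * Pc n ^ m
  = Qc m ^ n * prod1 n (fun j => prod1 m (fun k => G x (cos (theta n j) ^ 2) (cos (theta m k) ^ 2))).
Proof.
  unfold Pc, Qc.
  rewrite <- prod1_pow. rewrite <- (prod1_mul n). rewrite <- (prod1_const n (2 * 4 ^ (m - 1))), <- (prod1_mul n).
  apply prod1_ext. intros j hj.
  rewrite term_eq by assumption.
  replace (2 * (4 ^ (m - 1) * prod1 m (fun k =>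
       (cosh (alpha j / 2) * cos (theta n j) - cos (2 * theta m k)) ^ 2 +
       (sinh (alpha j / 2) * sin (theta n j)) ^ 2)) * (cos (theta n j) ^ 2) ^ m)
   with (2 * 4 ^ (m - 1) * (prod1 m (fun _ => cos (theta n j) ^ 2) * prod1 m (fun k =>
       (cosh (alpha j / 2) * cos (theta n j) - cos (2 * theta m k)) ^ 2 +
       (sinh (alpha j / 2) * sin (theta n j)) ^ 2)))
   by (rewrite prod1_const; ring).
  rewrite <- (prod1_mul m). f_equal.
  apply prod1_ext. intros k hk.
  pose proof (cos_theta_pos n j hj) as hc.
  destruct (halpha j hj) as [_ ha].
  rewrite cos_2a_cos.
  replace (2 * cos (theta m k) * cos (theta m k) - 1) with (2 * cos (theta m k) ^ 2 - 1) by ring.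
  apply E_id.
  - lra.
  - exact ha.
  - pose proof (cosh_sinh_sq (alpha j / 2)). lra.
  - pose proof (sin2_cos2 (theta n j)). unfold Rsqr in *. simpl in *. lra.
Qed.

Lemma PQ n : (0 < n)%nat -> Pc n * Qc n = 1.
Proof.
  intros hn.
  pose proof (MC.cheb_prod n (fun k => cos (2 * theta n k))
     (cosh 0 * cos PI) (sinh 0 * sin PI) hn
     (fun k hk => d_roots n k hn hk) (fun i j hi hj => d_inj n i j hi hj)) as HC.
  cbv beta in HC. rewrite chpA in HC. cbn [fst snd] in HC.
  rewrite !Rmult_0_r, cosh_0, sinh_0, cos_PI, sin_PI in HC.
  assert (Hs : sin (INR n * PI) = 0) by apply sin_kPI.
  pose proof (sin2_cos2 (INR n * PI)) as Hc. rewrite Hs in Hc. unfold Rsqr in Hc.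
  assert (Hp : prod1 n (fun k => (1 * -1 - cos (2 * theta n k)) ^ 2 + (0 * 0) ^ 2)
             = 4 ^ n * Pc n ^ 2).
  { unfold Pc. rewrite <- (prod1_pow n), <- (prod1_const n 4), <- (prod1_mul n).
    apply prod1_ext. intros k hk. rewrite cos_2a_cos. ring. }
  rewrite Hp in HC.
  assert (HP : 0 < Pc n).
  { unfold Pc. apply prod1_pos. intros j hj. pose proof (cos_theta_pos n j hj). nra. }
  assert (H4 : 4 ^ n = 4 * 4 ^ (n - 1)).
  { replace n with (S (n - 1)) at 1 by lia. reflexivity. }
  assert (HQ : 0 < Qc n) by (unfold Qc; pose proof (pow_lt 4 (n - 1)); lra).
  assert (Hsq : (Pc n * Qc n) ^ 2 = 1).
  { unfold Qc. rewrite H4 in HC. simpl in HC |- *. nra. }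
  assert (Hy : 0 < Pc n * Qc n) by (apply Rmult_lt_0_compat; assumption).
  set (y := Pc n * Qc n) in *. simpl in Hsq. nra.
Qed.

Theorem mainTheorem13 (m n : nat) (x : R) (alpha beta : nat -> R)
  (hm : (0 < m)%nat) (hn : (0 < n)%nat) (hx : 2 <= x)
  (halpha : forall j : nat, (1 <= j <= n)%nat ->
     0 <= alpha j /\
     cosh (alpha j / 2) = x / cos (theta n j) - cos (theta n j))
  (hbeta : forall k : nat, (1 <= k <= m)%nat ->
     0 <= beta k /\
     cosh (beta k / 2) = x / cos (theta m k) - cos (theta m k)) :
  prod1 n (fun j => cosh (INR m * alpha j)
                    + cos (INR m * PI * (2 * INR j - 1) / (2 * INR n)))
  = prod1 m (fun k => cosh (INR n * beta k)
                    + cos (INR n * PI * (2 * INR k - 1) / (2 * INR m))).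
Proof.
  pose proof (side m n x alpha hm hn halpha) as H1.
  pose proof (side n m x beta hn hm hbeta) as H2.
  pose proof (PQ n hn) as P1. pose proof (PQ m hm) as P2.
  set (L := prod1 n _) in *. set (Rr := prod1 m _) in *.
  assert (K : prod1 m (fun j => prod1 n (fun k => G x (cos (theta m j) ^ 2) (cos (theta n k) ^ 2)))
            = prod1 n (fun j => prod1 m (fun k => G x (cos (theta n j) ^ 2) (cos (theta m k) ^ 2)))).
  { rewrite prod1_swap. apply prod1_ext. intros j hj. apply prod1_ext. intros k hk. apply G_sym. }
  rewrite K in H2.
  transitivity (L * (Pc n * Qc n) ^ m).
  { rewrite P1, pow1. ring. }
  transitivity (Rr * (Pc m * Qc m) ^ n).
  2: { rewrite P2, pow1. ring. }
  rewrite !Rpow_mult_distr, <- !Rmult_assoc, H1, H2. ring.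
Qed.
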